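(* Let $\Sigma$ be a ranked set and $L\subseteq\mathsf{H}_0\Sigma$. The following are equivalent: (1) $L$ is recognised by an $\mathsf{H}$-algebra that is finite on every arity; (2) $L$ is recognised by (i.e. is a union of classes of) a congruence of the algebra $\mathsf{H}\Sigma$ with finitely many equivalence classes on every arity; (3) $L$ is recognised by an equivalence relation on $\mathsf{H}\Sigma$ that is compatible with all HR-operations and has finitely many equivalence classes on every arity.
   Context: A ranked set is a set in which each element has an arity in $\{0,1,2,\dots\}$; morphisms are arity-preserving functions. A sourced hypergraph of arity $n$ over $\Sigma$: finite vertex set, finite ranked set of hyperedges labelled arity-preservingly by $\Sigma$, incidence mapping each $m$-ary hyperedge $e$ to a non-repeating list $e[1],\dots,e[m]$ of vertices, injective source function $\{1,\dots,n\}\to$ vertices. $\mathsf{H}\Sigma$: such objects up to isomorphism; $\mathsf{H}_0\Sigma$: the arity-0 ones. Unit of $n$-ary $a$: vertices $1..n$ (identity sources), one hyperedge labelled $a$ with incidence $[1,\dots,n]$. Flattening of $G\in\mathsf{H}\mathsf{H}\Sigma$: hyperedges are pairs $(e,f)$ with $e$ a hyperedge of $G$ and $f$ a hyperedge of the label of $e$ (label from $f$); vertices are vertices of $G$ and pairs $(e,v)$ with $v$ a non-source vertex of the label of $e$; sources from $G$; the incidence of $(e,f)$ is that of $f$ with $v\mapsto(e,v)$ for non-sources and $v\mapsto e[i]$ if $v$ is the $i$-th source of the label of $e$. An $\mathsf{H}$-algebra is a ranked set $A$ with arity-preserving $\pi:\mathsf{H}A\to A$ such that $\pi(\mathrm{unit}\,a)=a$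 and $\pi\circ\mathsf{H}\pi=\pi\circ\mathrm{flatten}$ (with $\mathsf{H}\pi$ acting by relabelling); homomorphisms $h$ satisfy $h\circ\pi_A=\pi_B\circ\mathsf{H}h$. $\mathsf{H}\Sigma$ is an algebra with flattening as product. $L$ is recognised by $\mathcal{A}$ if $L=h^{-1}(F)\cap\mathsf{H}_0\Sigma$ for some homomorphism $h:\mathsf{H}\Sigma\to\mathcal{A}$ and set $F$. For a ranked set $X$ of variables and $t\in\mathsf{H}(\mathsf{H}\Sigma+X)$, the polynomial operation $(\mathsf{H}\Sigma)^X\to\mathsf{H}\Sigma$ maps an arity-preserving valuation $\eta$ to the flattening of $t$ with every label $x\in X$ replaced by $\eta(x)$. An equivalence relation on $\mathsf{H}\Sigma$ is compatible with an operation if componentwise equivalent inputs give equivalent outputs; a congruence is an equivalence relation compatible with all polynomial operations. The HR-operations are: for each $n$, parallel composition of two $n$-ary sourced hypergraphs (disjoint union with corresponding sources fused); for each $n$, the operation adding a new isolated vertex that becomes source $n+1$; a constant for the empty hypergraph (arity 0) and a constant for the unit of each $a\in\Sigma$; for each injective $f:\{1,\dots,k\}\to\{1,\dots,n\}$, the operation mapping an $n$-ary sourced hypergraph to the $k$-ary one whose source function is the old source function composed with $f$. *)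

(* Defs.v *)
From HB Require Import structures.
From mathcomp Require Import all_boot.

Set Implicit Arguments.
Unset Strict Implicit.
Unset Printing Implicit Defensive.

Record rset := RSet { rcar :> Type; rar : rcar -> nat }.

Record rmap (A B : rset) := RMap {
  rfun :> A -> B;
  rfunP : forall a, rar (rfun a) = rar a }.

Record hg (A : rset) := HG {
  hV : finType;
  hE : finType;
  hlab : hE -> A;
  hinc : hE -> seq hV;
  hsrc : seq hV;
  hinc_size : forall e, size (hinc e) = rar (hlab e);
  hinc_uniq : forall e, uniq (hinc e);
  hsrc_uniq : uniq hsrc }.

Definition harity (A : rset) (g : hg A) : nat := size (hsrc g).
Definition HR (A : rset) : rset := @RSet (hg A) (@harity A).

Definition hunit (A : rset) (a : A) : hg A :=
  @HG A ('I_(rar a) : finType) (unit : finType) (fun _ => a)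
    (fun _ => enum 'I_(rar a)) (enum 'I_(rar a))
    (fun _ => size_enum_ord _) (fun _ => enum_uniq _) (enum_uniq _).

Definition hempty (A : rset) : hg A :=
  @HG A (void : finType) (void : finType) (fun e => match e with end)
    (fun e => match e with end) [::]
    (fun e => match e with end) (fun e => match e with end) isT.

Fixpoint nth_lt (T : Type) (s : seq T) (i : nat) : i < size s -> T :=
  match s return i < size s -> T with
  | [::] => fun H => False_rect _ (ltac:(discriminate H))
  | x :: s' => match i return i < (size s').+1 -> T with
               | 0 => fun _ => x
               | i'.+1 => fun H => @nth_lt T s' i' H
               end
  end.

Lemma nth_ltE (T : Type) (s : seq T) i (H : i < size s) x0 : nth_lt H = nth x0 s i.
Proof. by elim: s i H => [|x s IH] [|i] //= H. Qed.

(* Gluing the vertices of a hypergraph [x] onto a list [b] of vertices of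
   another structure: the i-th source of [x] is sent to the i-th entry of [b],
   and every non-source vertex of [x] is kept (as an element of [nonsrc x]). *)
Definition nonsrc (A : rset) (x : hg A) : finType :=
  ({v : hV x | v \notin hsrc x} : finType).

Definition decb (c : bool) : {c} + {~~ c} :=
  if c as c' return {c'} + {~~ c'} then left isT else right isT.

Section Attach.
Variables (A : rset) (x : hg A) (W : eqType) (b : seq W)
          (Hb : size b = size (hsrc x)).

Lemma attach_lt (v : hV x) : v \in hsrc x -> index v (hsrc x) < size b.
Proof. by rewrite Hb index_mem. Qed.

Definition attach (v : hV x) : W + nonsrc x :=
  match decb (v \in hsrc x) with
  | left H => inl (nth_lt (attach_lt H))
  | right H => inr (exist _ v H : nonsrc x)
  end.

Lemma attach_src v w0 : v \in hsrc x -> attach v = inl (nth w0 b (index v (hsrc x))).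
Proof.
move=> H; rewrite /attach; case: decb => H0.
  by rewrite (nth_ltE _ w0).
by exfalso; rewrite H in H0.
Qed.

Lemma attach_nsrc v (H : v \notin hsrc x) : attach v = inr (exist _ v H : nonsrc x).
Proof.
rewrite /attach; case: decb => H0; first by exfalso; rewrite H0 in H.
by congr inr; apply: val_inj.
Qed.

Lemma attach_inj : uniq b -> injective attach.
Proof.
move=> ub v1 v2.
case: (boolP (v1 \in hsrc x)) => H1; case: (boolP (v2 \in hsrc x)) => H2.
- pose w0 := nth_lt (attach_lt H1).
  rewrite !(attach_src w0) // => -[].
  move/eqP; rewrite nth_uniq ?attach_lt //.
  move/eqP=> E.
  by rewrite -(nth_index v1 H1) -(nth_index v1 H2) E.
- by rewrite (attach_src (nth_lt (attach_lt H1)) H1) (attach_nsrc H2).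
- by rewrite (attach_src (nth_lt (attach_lt H2)) H2) (attach_nsrc H1).
- by rewrite (attach_nsrc H1) (attach_nsrc H2) => -[].
Qed.
End Attach.

Lemma Tagged_inj (I : eqType) (T_ : I -> Type) (i : I) (u1 u2 : T_ i) :
  Tagged T_ u1 = Tagged T_ u2 -> u1 = u2.
Proof.
move=> E; have := congr1 (tagged_as (Tagged T_ u1)) E.
by rewrite !tagged_asE.
Qed.

Definition relabel (A B : rset) (f : rmap A B) (g : hg A) : hg B :=
  @HG B (hV g) (hE g) (fun e => f (hlab e)) (fun e => hinc e) (hsrc g)
    (fun e => etrans (hinc_size e) (esym (rfunP f _)))
    (fun e => hinc_uniq e) (hsrc_uniq g).

Definition iso (A : rset) (R : A -> A -> Prop) (g h : hg A) : Prop :=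
  exists (fv : hV g -> hV h) (fe : hE g -> hE h),
    [/\ bijective fv, bijective fe,
        forall e, R (hlab e) (hlab (fe e)),
        forall e, hinc (fe e) = map fv (hinc e)
      & hsrc h = map fv (hsrc g)].

Section Flatten.
Variables (A : rset) (G : hg (HR A)).

Definition fl_V : finType :=
  (hV G + {e : hE G & nonsrc (@hlab _ G e)})%type.
Definition fl_E : finType := {e : hE G & hE (@hlab _ G e)}.

Definition fl_vert (e : hE G) (v : hV (@hlab _ G e)) : fl_V :=
  match attach (hinc_size e : size (hinc e) = size (hsrc (@hlab _ G e))) v with
  | inl w => inl w
  | inr u => inr (Tagged (fun e => nonsrc (@hlab _ G e)) u)
  end.

Lemma fl_vert_inj e : injective (@fl_vert e).
Proof.
move=> v1 v2; rewrite /fl_vert.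
have Ainj := @attach_inj _ _ _ _ (hinc_size e : size (hinc e) = size (hsrc (@hlab _ G e)))
                        (hinc_uniq e).
case E1: attach => [w1|u1]; case E2: attach => [w2|u2] //.
- by move=> [E]; apply: Ainj; rewrite E1 E2 E.
- move=> [] H; have E := Tagged_inj H.
  by apply: Ainj; rewrite E1 E2 E.
Qed.

Definition fl_lab (ef : fl_E) : A := hlab (tagged ef).
Definition fl_inc (ef : fl_E) : seq fl_V :=
  map (@fl_vert (tag ef)) (hinc (tagged ef)).

Lemma fl_inc_size ef : size (fl_inc ef) = rar (fl_lab ef).
Proof. by rewrite size_map hinc_size. Qed.

Lemma fl_inc_uniq ef : uniq (fl_inc ef).
Proof. by rewrite map_inj_uniq ?hinc_uniq //; apply: fl_vert_inj. Qed.

Lemma fl_src_uniq : uniq (map inl (hsrc G) : seq fl_V).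
Proof. by rewrite map_inj_uniq ?hsrc_uniq // => ? ? []. Qed.

Definition flatten : hg A :=
  @HG A fl_V fl_E fl_lab fl_inc (map inl (hsrc G))
    fl_inc_size fl_inc_uniq fl_src_uniq.
End Flatten.

(* parallel composition of two sourced hypergraphs of the same arity:
   disjoint union, with the i-th source of [h] fused with the i-th source of [g] *)
Section Par.
Variables (A : rset) (g h : hg A) (p : harity g = harity h).

Definition par_V : finType := (hV g + nonsrc h)%type.
Definition par_E : finType := (hE g + hE h)%type.
Definition par_lab (e : par_E) : A :=
  match e with inl e => hlab e | inr e => hlab e end.
Definition par_inc (e : par_E) : seq par_V :=
  match e with
  | inl e => map inl (hinc e)
  | inr e => map (attach (p : size (hsrc g) = size (hsrc h))) (hinc e)
  end.

Lemma par_inc_size e : size (par_inc e) = rar (par_lab e).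
Proof. by case: e => e /=; rewrite size_map hinc_size. Qed.

Lemma par_inc_uniq e : uniq (par_inc e).
Proof.
case: e => e /=; rewrite map_inj_uniq ?hinc_uniq //; first by move=> ? ? [].
exact: (@attach_inj _ _ _ _ (p : size (hsrc g) = size (hsrc h)) (hsrc_uniq g)).
Qed.

Lemma par_src_uniq : uniq (map inl (hsrc g) : seq par_V).
Proof. by rewrite map_inj_uniq ?hsrc_uniq // => ? ? []. Qed.

Definition hpar : hg A :=
  @HG A par_V par_E par_lab par_inc (map inl (hsrc g))
      par_inc_size par_inc_uniq par_src_uniq.
End Par.

Section AddSrc.
Variables (A : rset) (g : hg A).

Lemma addsrc_inc_size (e : hE g) : size (map Some (hinc e)) = rar (hlab e).
Proof. by rewrite size_map hinc_size. Qed.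

Lemma addsrc_inc_uniq (e : hE g) : uniq (map Some (hinc e) : seq (option (hV g))).
Proof. by rewrite map_inj_uniq ?hinc_uniq // => ? ? []. Qed.

Lemma addsrc_src_uniq : uniq (rcons (map Some (hsrc g)) None).
Proof.
rewrite rcons_uniq map_inj_uniq ?hsrc_uniq ?andbT //; last by move=> ? ? [].
by apply/mapP => -[].
Qed.

Definition haddsrc : hg A :=
  @HG A (option (hV g) : finType) (hE g) (fun e => hlab e)
      (fun e => map Some (hinc e)) (rcons (map Some (hsrc g)) None)
      addsrc_inc_size addsrc_inc_uniq addsrc_src_uniq.
End AddSrc.

Section Forget.
Variables (A : rset) (k n : nat) (f : 'I_k -> 'I_n) (finj : injective f)
          (g : hg A) (p : harity g = n).

Lemma forget_lt (i : 'I_k) : f i < size (hsrc g).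
Proof. by rewrite [size _]p ltn_ord. Qed.

Definition forget_src : seq (hV g) :=
  [seq nth_lt (forget_lt i) | i <- enum 'I_k].

Lemma forget_src_uniq : uniq forget_src.
Proof.
rewrite map_inj_uniq ?enum_uniq // => i j /=.
have x0 := nth_lt (forget_lt i); rewrite !(nth_ltE _ x0).
move/eqP; rewrite nth_uniq ?forget_lt ?hsrc_uniq // => /eqP E.
by apply: finj; apply: val_inj.
Qed.

Definition hforget : hg A :=
  @HG A (hV g) (hE g) (fun e => hlab e) (fun e => hinc e) forget_src
      (fun e => hinc_size e) (fun e => hinc_uniq e) forget_src_uniq.
End Forget.

Definition sum_ar (A B : rset) (s : (A + B)%type) : nat :=
  match s with inl a => rar a | inr b => rar b end.
Definition sumR (A B : rset) : rset := @RSet (A + B)%type (@sum_ar A B).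

Definition copair_fun (S X : rset) (eta : rmap X (HR S)) (s : sumR (HR S) X)
  : HR S := match s with inl g => g | inr x => eta x end.

Lemma copair_funP (S X : rset) (eta : rmap X (HR S)) s :
  rar (copair_fun eta s) = rar s.
Proof. by case: s => // x; exact: (rfunP eta x). Qed.

Definition copair (S X : rset) (eta : rmap X (HR S)) : rmap (sumR (HR S) X) (HR S)
  := RMap (copair_funP eta).

Definition polyop (S X : rset) (t : hg (sumR (HR S) X)) (eta : rmap X (HR S))
  : hg S := flatten (relabel (copair eta) t).

(* H A is taken up to isomorphism: the product must be isomorphism invariant *)
Definition is_Halg (A : rset) (pi : rmap (HR A) A) : Prop :=
  [/\ forall g g' : hg A, iso (@eq A) g g' -> pi g = pi g',
      forall a : A, pi (hunit a) = a
    & forall G : hg (HR A), pi (relabel pi G) = pi (flatten G)].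

Definition is_Hhom (S A : rset) (pi : rmap (HR A) A) (h : rmap (HR S) A) : Prop :=
  (forall g g' : hg S, iso (@eq S) g g' -> h g = h g') /\
  (forall G : hg (HR S), h (flatten G) = pi (relabel h G)).

Definition finite_on_arities (A : rset) : Prop :=
  forall n, exists (m : nat) (enm : 'I_m -> A),
    forall a : A, rar a = n -> exists i, enm i = a.

Definition recognised_by_alg (S A : rset) (L : hg S -> Prop)
  (pi : rmap (HR A) A) : Prop :=
  exists h : rmap (HR S) A, is_Hhom pi h /\
    exists F : A -> Prop, forall g : hg S, L g <-> (F (h g) /\ harity g = 0).

(* equivalence relations on the ranked set H S (so arity-respecting and
   defined on isomorphism classes) *)
Definition hequiv (S : rset) (R : hg S -> hg S -> Prop) : Prop :=
  [/\ forall g, R g g,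
      forall g g', R g g' -> R g' g,
      forall g1 g2 g3, R g1 g2 -> R g2 g3 -> R g1 g3,
      forall g g', R g g' -> harity g = harity g'
    & forall g g', iso (@eq S) g g' -> R g g'].

Definition finite_index (S : rset) (R : hg S -> hg S -> Prop) : Prop :=
  forall n, exists (m : nat) (rep : 'I_m -> hg S),
    forall g, harity g = n -> exists i, R g (rep i).

Definition saturates (S : rset) (R : hg S -> hg S -> Prop) (L : hg S -> Prop)
  : Prop := forall g g', R g g' -> L g -> L g'.

Definition congruence (S : rset) (R : hg S -> hg S -> Prop) : Prop :=
  hequiv R /\
  forall (X : rset) (t : hg (sumR (HR S) X)) (eta1 eta2 : rmap X (HR S)),
    (forall x, R (eta1 x) (eta2 x)) -> R (polyop t eta1) (polyop t eta2).

(* compatibility with the HR-operations (compatibility with the constants,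
   empty hypergraph and units, is automatic by reflexivity) *)
Definition HR_compatible (S : rset) (R : hg S -> hg S -> Prop) : Prop :=
  [/\ hequiv R,
      forall (g1 g2 h1 h2 : hg S) (p1 : harity g1 = harity h1)
             (p2 : harity g2 = harity h2),
        R g1 g2 -> R h1 h2 -> R (hpar p1) (hpar p2),
      forall g1 g2 : hg S, R g1 g2 -> R (haddsrc g1) (haddsrc g2)
    & forall (k n : nat) (f : 'I_k -> 'I_n) (finj : injective f)
             (g1 g2 : hg S) (p1 : harity g1 = n) (p2 : harity g2 = n),
        R g1 g2 -> R (hforget finj p1) (hforget finj p2)].

(* Main.v *)
Require Import Defs.
From HB Require Import structures.
From mathcomp Require Import all_boot.
From Stdlib Require Import ProofIrrelevance FunctionalExtensionality ClassicalEpsilon Classical PropExtensionality.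
Import Defs.
Set Implicit Arguments.
Unset Strict Implicit.
Unset Printing Implicit Defensive.


Lemma surj_bij (T U : finType) (f : T -> U) :
  injective f -> (forall y, exists x, f x = y) -> bijective f.
Proof.
move=> inj sur.
have g_ex y : {x | f x = y}.
  case: (pickP [pred x | f x == y]) => [x /eqP Hx|H]; first by exists x.
  exfalso; case: (sur y) => x Hx; by have := H x; rewrite /= Hx eqxx.
exists (fun y => sval (g_ex y)) => [x|y]; last by case: (g_ex y).
apply: inj; by case: (g_ex (f x)).
Qed.

Lemma bij_surj (T U : Type) (f : T -> U) : bijective f -> forall y, exists x, f x = y.
Proof. by case=> g _ K y; exists (g y). Qed.

Section IsoGen.
Variable A : rset.

Lemma mk_iso (R : A -> A -> Prop) (g h : hg A) (fv : hV g -> hV h) (fe : hE g -> hE h) :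
  injective fv -> (forall y, exists x, fv x = y) ->
  injective fe -> (forall y, exists x, fe x = y) ->
  (forall e, R (hlab e) (hlab (fe e))) ->
  (forall e, hinc (fe e) = map fv (hinc e)) ->
  hsrc h = map fv (hsrc g) -> iso R g h.
Proof.
move=> i1 s1 i2 s2 Hl Hi Hs; exists fv, fe; split=> //; exact: surj_bij.
Qed.

Lemma iso_refl (R : A -> A -> Prop) g : (forall a, R a a) -> iso R g g.
Proof.
move=> Rr; exists id, id; split=> //; try exact: (Bijective (fun x => erefl) (fun x => erefl)).
  by move=> e; rewrite map_id.
by rewrite map_id.
Qed.

Lemma iso_sym (R : A -> A -> Prop) g h : (forall a b, R a b -> R b a) -> iso R g h -> iso R h g.
Proof.
move=> Rs [fv [fe [[gv fgv gfv] [ge fge gfe] Hl Hi Hs]]].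
exists gv, ge; split.
- exact: (Bijective gfv fgv).
- exact: (Bijective gfe fge).
- by move=> e; apply: Rs; have := Hl (ge e); rewrite gfe.
- move=> e; have := Hi (ge e); rewrite gfe => ->.
  by rewrite -map_comp map_id_in // => x _ /=; rewrite fgv.
- by rewrite Hs -map_comp map_id_in // => x _ /=; rewrite fgv.
Qed.

Lemma iso_trans (R : A -> A -> Prop) g h k : (forall a b c, R a b -> R b c -> R a c) ->
  iso R g h -> iso R h k -> iso R g k.
Proof.
move=> Rt [fv [fe [bv be Hl Hi Hs]]] [fv' [fe' [bv' be' Hl' Hi' Hs']]].
exists (fv' \o fv), (fe' \o fe); split.
- exact: bij_comp.
- exact: bij_comp.
- by move=> e; apply: Rt (Hl e) (Hl' _).
- by move=> e /=; rewrite Hi' Hi -map_comp.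
- by rewrite Hs' Hs -map_comp.
Qed.

Lemma isoE_refl (g : hg A) : iso eq g g.
Proof. exact: iso_refl. Qed.
Lemma isoE_sym (g h : hg A) : iso eq g h -> iso eq h g.
Proof. by apply: iso_sym => a b ->. Qed.
Lemma isoE_trans (g h k : hg A) : iso eq g h -> iso eq h k -> iso eq g k.
Proof. by apply: iso_trans => a b c -> ->. Qed.

Lemma iso_sig (R : A -> A -> Prop) g h : iso R g h ->
  {fv : hV g -> hV h & {fe : hE g -> hE h | [/\ bijective fv, bijective fe,
        forall e, R (hlab e) (hlab (fe e)),
        forall e, hinc (fe e) = map fv (hinc e)
      & hsrc h = map fv (hsrc g)]}}.
Proof.
move=> H; have [fv Hfv] := constructive_indefinite_description _ H.
have [fe Hfe] := constructive_indefinite_description _ Hfv.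
by exists fv, fe.
Qed.

Lemma HG_eq (V E : finType) (l1 l2 : E -> A) (i1 i2 : E -> seq V) (s1 s2 : seq V)
  p1 p2 q1 q2 r1 r2 :
  l1 = l2 -> i1 = i2 -> s1 = s2 ->
  @HG A V E l1 i1 s1 p1 q1 r1 = @HG A V E l2 i2 s2 p2 q2 r2.
Proof.
move=> E1 E2 E3; subst.
by rewrite (proof_irrelevance _ p1 p2) (proof_irrelevance _ q1 q2) (proof_irrelevance _ r1 r2).
Qed.

End IsoGen.

Definition nsmap (A B : rset) (g : hg A) (h : hg B) (fv : hV g -> hV h)
  (H : forall v, v \notin hsrc g -> fv v \notin hsrc h) (u : nonsrc g) : nonsrc h :=
  exist _ (fv (val u)) (H _ (valP u)).

Lemma attach_PI (A : rset) (x : hg A) (W : eqType) (b : seq W) H1 H2 v :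
  @attach A x W b H1 v = @attach A x W b H2 v.
Proof. by rewrite (eq_irrelevance H1 H2). Qed.

Section FlVert.
Variables (A : rset) (G : hg (HR A)).

Lemma fl_vert_src (e : hE G) (v : hV (@hlab _ G e)) w0 : v \in hsrc (hlab e) ->
  @fl_vert A G e v = inl (nth w0 (hinc e) (index v (hsrc (hlab e)))).
Proof. by move=> H; rewrite /fl_vert (attach_src _ w0 H). Qed.

Lemma fl_vert_nsrc (e : hE G) (v : hV (@hlab _ G e)) (H : v \notin hsrc (hlab e)) :
  @fl_vert A G e v = inr (Tagged (fun e => nonsrc (@hlab _ G e)) (exist _ v H : nonsrc _)).
Proof. by rewrite /fl_vert (attach_nsrc _ H). Qed.
End FlVert.

Lemma Tagged_eq (I : eqType) (T_ : I -> Type) (i j : I) (u : T_ i) (v : T_ j) :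
  Tagged T_ u = Tagged T_ v -> i = j.
Proof. by move/(congr1 tag). Qed.


Lemma tag_inj (I J : eqType) (TI : I -> Type) (TJ : J -> Type) (fi : I -> J)
  (ft : forall i, TI i -> TJ (fi i)) :
  injective fi -> (forall i, injective (ft i)) ->
  injective (fun x : {i : I & TI i} => Tagged TJ (ft (tag x) (tagged x))).
Proof.
move=> ifi ift [i u] [j v] /= H.
have E := ifi _ _ (Tagged_eq H); subst j.
by rewrite (ift _ _ _ (Tagged_inj H)).
Qed.

Lemma tag_surj (I J : eqType) (TI : I -> Type) (TJ : J -> Type) (fi : I -> J)
  (ft : forall i, TI i -> TJ (fi i)) :
  (forall j, exists i, fi i = j) -> (forall i y, exists x, ft i x = y) ->
  forall y, exists x : {i : I & TI i}, Tagged TJ (ft (tag x) (tagged x)) = y.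
Proof.
move=> sfi sft [j v]; case: (sfi j) => i Ei; subst j.
by case: (sft i v) => u Eu; exists (Tagged TI u); rewrite /= Eu.
Qed.

Lemma sum_inj (T1 T2 U1 U2 : Type) (f1 : T1 -> U1) (f2 : T2 -> U2) :
  injective f1 -> injective f2 ->
  injective (fun x => match x with inl a => @inl U1 U2 (f1 a) | inr b => inr (f2 b) end).
Proof. by move=> i1 i2 [a|b] [a'|b'] // [] /= E; rewrite ?(i1 _ _ E) ?(i2 _ _ E). Qed.

Lemma sum_surj (T1 T2 U1 U2 : Type) (f1 : T1 -> U1) (f2 : T2 -> U2) :
  (forall y, exists x, f1 x = y) -> (forall y, exists x, f2 x = y) ->
  forall y, exists x, (fun x => match x with inl a => @inl U1 U2 (f1 a) | inr b => inr (f2 b) end) x = y.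
Proof.
move=> s1 s2 [a|b].
  by case: (s1 a) => x <-; exists (inl x).
by case: (s2 b) => x <-; exists (inr x).
Qed.

Lemma nsmap_inj (A B : rset) (g : hg A) (h : hg B) fv H :
  injective fv -> injective (@nsmap A B g h fv H).
Proof. by move=> i [u Hu] [v Hv] [] /i E; apply: val_inj. Qed.

Lemma nsmap_surj (A B : rset) (g : hg A) (h : hg B) fv H :
  (forall y, exists x, fv x = y) -> (forall v, fv v \notin hsrc h -> v \notin hsrc g) ->
  forall y, exists x, @nsmap A B g h fv H x = y.
Proof.
move=> s H' [w Hw]; case: (s w) => v Ev; subst w.
by exists (exist _ v (H' _ Hw)); apply: val_inj.
Qed.

Lemma iso_nsrc (A : rset) (R : A -> A -> Prop) (g h : hg A) fv :
  injective fv -> hsrc h = map fv (hsrc g) ->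
  forall v, (fv v \in hsrc h) = (v \in hsrc g).
Proof. by move=> i -> v; rewrite mem_map. Qed.

Section FlattenIso.
Variables (S : rset) (G G' : hg (HR S)).

Lemma flatten_iso : iso (fun a b : HR S => iso eq a b) G G' -> iso eq (flatten G) (flatten G').
Proof.
case/iso_sig => fv [fe [bv be Hl Hi Hs]].
have per := fun e => iso_sig (Hl e).
pose pv e := projT1 (per e).
pose pe e := proj1_sig (projT2 (per e)).
have Pe e : [/\ bijective (pv e), bijective (pe e),
        forall f, hlab f = hlab (pe e f),
        forall f, hinc (pe e f) = map (pv e) (hinc f)
      & hsrc (@hlab _ G' (fe e)) = map (pv e) (hsrc (@hlab _ G e))].
  by rewrite /pv /pe; case: (per e) => x [y P].
have pvi e : injective (pv e) by case: (Pe e) => /bij_inj.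
have Hmem e v : (pv e v \in hsrc (@hlab _ G' (fe e))) = (v \in hsrc (@hlab _ G e)).
  by case: (Pe e) => _ _ _ _ ->; rewrite (mem_map (pvi e)).
have Hns e : forall v, v \notin hsrc (@hlab _ G e) -> pv e v \notin hsrc (@hlab _ G' (fe e)).
  by move=> v; rewrite Hmem.
pose TF (t : {e : hE G & nonsrc (@hlab _ G e)}) :=
  Tagged (fun e' => nonsrc (@hlab _ G' e')) (nsmap (Hns (tag t)) (tagged t)).
pose Fv (x : hV (flatten G)) : hV (flatten G') :=
  match x with inl v => inl (fv v) | inr t => inr (TF t) end.
pose Fe (t : hE (flatten G)) : hE (flatten G') :=
  Tagged (fun e' => hE (@hlab _ G' e')) (pe (tag t) (tagged t)).
apply: (@mk_iso _ _ _ _ Fv Fe).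
- apply: sum_inj; first exact: bij_inj.
  apply: (@tag_inj _ _ _ _ fe (fun e => nsmap (Hns e))); first exact: bij_inj.
  by move=> e; apply: nsmap_inj.
- apply: sum_surj; first exact: bij_surj.
  apply: (@tag_surj _ _ _ _ fe (fun e => nsmap (Hns e))); first exact: bij_surj.
  move=> e; apply: nsmap_surj; first by case: (Pe e) => /bij_surj.
  by move=> v; rewrite Hmem.
- apply: tag_inj; first exact: bij_inj.
  by move=> e; case: (Pe e) => _ /bij_inj.
- apply: tag_surj; first exact: bij_surj.
  by move=> e; case: (Pe e) => _ /bij_surj.
- by case=> e f; rewrite /Fe /= /fl_lab /=; case: (Pe e) => _ _ ->.
- case=> e f; rewrite /Fe /= /fl_inc /=.
  case: (Pe e) => _ _ _ -> _; rewrite -map_comp -map_comp.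
  apply/eq_in_map => v _ /=.
  case: (boolP (v \in hsrc (@hlab _ G e))) => Hv.
    have Hv' : pv e v \in hsrc (@hlab _ G' (fe e)) by rewrite Hmem.
    have w0 : hV G := nth_lt (attach_lt (hinc_size e) Hv).
    rewrite (fl_vert_src w0 Hv) (fl_vert_src (fv w0) Hv') /=.
    case: (Pe e) => _ _ _ _ ->; rewrite index_map //.
    have -> : hinc (fe e) = map fv (hinc e) := Hi e.
    rewrite (nth_map w0) // (hinc_size e) /= /harity index_mem //.
    exact: pvi.
  rewrite (fl_vert_nsrc Hv) (fl_vert_nsrc (Hns _ _ Hv)) /=.
  by congr (inr (Tagged _ _)); apply: val_inj.
- by rewrite /= Hs -!map_comp.
Qed.
End FlattenIso.

Lemma map_nth_enum (T : Type) (x0 : T) (s : seq T) n : size s = n ->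
  map (fun i : 'I_n => nth x0 s i) (enum 'I_n) = s.
Proof.
move=> <-; rewrite (map_comp (nth x0 s) val) val_enum_ord map_nth_iota0 //.
by rewrite take_size.
Qed.

Lemma map_nth_lt_enum (T : Type) (s : seq T) :
  map (fun i : 'I_(size s) => nth_lt (ltn_ord i : val i < size s)) (enum 'I_(size s)) = s.
Proof.
case: s => [|x s]; first by rewrite /= enum_ord0.
rewrite -[RHS](map_nth_enum x (erefl (size (x :: s)))).
by apply/eq_map => i; rewrite (nth_ltE _ x).
Qed.

Section Unit.
Variables (S : rset) (g : hg S).

Lemma flatten_unit : iso eq (flatten (@hunit (HR S) g)) g.
Proof.
pose fv (x : hV (flatten (@hunit (HR S) g))) : hV g :=
  match x with inl i => nth_lt (ltn_ord i : val i < size (hsrc g)) | inr t => val (tagged t) end.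
pose fe (t : hE (flatten (@hunit (HR S) g))) : hE g := tagged t.
have fvE v0 (i : 'I_(@rar (HR S) g)) : fv (inl i) = nth v0 (hsrc g) i by rewrite /fv (nth_ltE _ v0).
apply: (@mk_iso _ eq _ _ fv fe).
- case=> [i|[[] [u Hu]]] [j|[[] [w Hw]]] //=.
  + have v0 := nth_lt (ltn_ord i : val i < size (hsrc g)).
    rewrite !(nth_ltE _ v0) => /eqP; rewrite nth_uniq ?hsrc_uniq ?ltn_ord // => /eqP E.
    by congr inl; apply: val_inj.
  + move=> E; exfalso; move: Hw; rewrite -E /fv.
    by rewrite (nth_ltE _ w) mem_nth.
  + move=> E; exfalso; move: Hu; rewrite E /fv.
    by rewrite (nth_ltE _ u) mem_nth.
  + by move=> E; subst w; congr (inr (Tagged _ _)); apply: val_inj.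
- move=> v; case: (boolP (v \in hsrc g)) => Hv.
    have Hi : index v (hsrc g) < @rar (HR S) g by rewrite /= /harity index_mem.
    exists (inl (Ordinal Hi)).
    by rewrite (fvE v) /= nth_index.
  by exists (inr (@Tagged _ tt (fun _ => nonsrc g) (exist _ v Hv : nonsrc g))).
- by case=> [[] f] [[] f'] /= E; subst f'.
- by move=> f; exists (@Tagged _ tt (fun _ => hE g) f).
- by case=> [[] f].
- case=> [[] f]; rewrite /fe /= /fl_inc /= -map_comp -[LHS]map_id.
  apply/eq_in_map => v _ /=.
  case: (boolP (v \in hsrc g)) => Hv.
    have Hi : index v (hsrc g) < @rar (HR S) g by rewrite /= /harity index_mem.
    rewrite (@fl_vert_src _ (@hunit (HR S) g) tt v (Ordinal Hi) Hv) (fvE v) /= nth_enum_ord //.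
    by rewrite nth_index.
  by rewrite (@fl_vert_nsrc _ (@hunit (HR S) g) tt v Hv).
- rewrite /= -map_comp.
  exact: (esym (map_nth_lt_enum (hsrc g))).
Qed.
End Unit.

Definition relabelR (A B : rset) (f : rmap A B) : rmap (HR A) (HR B) :=
  @RMap (HR A) (HR B) (fun g => relabel f g) (fun g => erefl).

Lemma flattenR_P (S : rset) (G : HR (HR S)) : @rar (HR S) (flatten G) = @rar (HR (HR S)) G.
Proof. by rewrite /= /harity /= size_map. Qed.
Definition flattenR (S : rset) : rmap (HR (HR S)) (HR S) := RMap (@flattenR_P S).

Lemma nth_lt_PI (T : Type) (s : seq T) i (p1 p2 : i < size s) : nth_lt p1 = nth_lt p2.
Proof. by rewrite (bool_irrelevance p1 p2). Qed.

Lemma relabel_flatten (A B : rset) (f : rmap A B) (G : hg (HR A)) :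
  relabel f (flatten G) = flatten (relabel (relabelR f) G).
Proof.
rewrite /relabel /flatten; apply: HG_eq => //.
apply: functional_extensionality => ef; rewrite /fl_inc; apply/eq_map => v.
rewrite /fl_vert /attach; case: decb => H //=.
by congr inl; apply: nth_lt_PI.
Qed.

Lemma relabel_comp (A B C : rset) (f : rmap B C) (h : rmap A B) (g : hg A) :
  relabel f (relabel h g) = relabel (@RMap A C (fun a => f (h a)) (fun a => etrans (rfunP f _) (rfunP h a))) g.
Proof. by apply: HG_eq. Qed.

Lemma relabel_ext (A B : rset) (f f' : rmap A B) (g : hg A) :
  (forall a, f a = f' a) -> relabel f g = relabel f' g.
Proof. by move=> E; apply: HG_eq => //; apply: functional_extensionality => e; rewrite E. Qed.

Lemma relabel_iso (A B : rset) (f : rmap A B) (g h : hg A) :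
  iso eq g h -> iso eq (relabel f g) (relabel f h).
Proof.
case=> fv [fe [bv be Hl Hi Hs]]; exists fv, fe; split=> //.
by move=> e /=; rewrite Hl.
Qed.

Lemma mem_map_inl (T U : eqType) (s : seq T) (v : T) :
  (@inl T U v \in map inl s) = (v \in s).
Proof. by rewrite mem_map // => x y []. Qed.

Lemma mem_map_inr (T U : eqType) (s : seq T) (u : U) :
  (@inr T U u \in map inl s) = false.
Proof. by apply/mapP => -[]. Qed.

Lemma inr_inj' (T U : Type) (a b : U) : @inr T U a = inr b -> a = b.
Proof. by case. Qed.
Lemma inl_inj' (T U : Type) (a b : T) : @inl T U a = inl b -> a = b.
Proof. by case. Qed.

Section Assoc.
Variables (S : rset) (K : hg (HR (HR S))).
Let K' := relabel (flattenR S) K.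
Let FK := flatten K.

Lemma ns1_P (t : {E : hE K & nonsrc (@hlab _ K E)}) :
  (inl (val (tagged t)) : hV (flatten (@hlab _ K (tag t)))) \notin hsrc (flatten (@hlab _ K (tag t))).
Proof. by rewrite /= mem_map_inl (valP (tagged t)). Qed.

Definition ns1 (t : {E : hE K & nonsrc (@hlab _ K E)}) : {E : hE K' & nonsrc (@hlab _ K' E)} :=
  Tagged (fun E : hE K' => nonsrc (@hlab _ K' E)) (@exist _ (fun x => x \notin hsrc (@hlab _ K' (tag t))) (inl (val (tagged t))) (ns1_P t) : nonsrc (@hlab _ K' (tag t))).

Lemma ns2_P (t : {Ee : hE FK & nonsrc (@hlab _ FK Ee)}) :
  (inr (Tagged (fun e => nonsrc (@hlab _ (@hlab _ K (tag (tag t))) e)) (tagged t))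
     : hV (flatten (@hlab _ K (tag (tag t))))) \notin hsrc (flatten (@hlab _ K (tag (tag t)))).
Proof. by rewrite /= mem_map_inr. Qed.

Definition ns2 (t : {Ee : hE FK & nonsrc (@hlab _ FK Ee)}) : {E : hE K' & nonsrc (@hlab _ K' E)} :=
  Tagged (fun E : hE K' => nonsrc (@hlab _ K' E)) (@exist _ (fun x => x \notin hsrc (@hlab _ K' (tag (tag t))))
     (inr (Tagged (fun e => nonsrc (@hlab _ (@hlab _ K (tag (tag t))) e)) (tagged t))) (ns2_P t) : nonsrc (@hlab _ K' (tag (tag t)))).

Definition as_v (x : hV (flatten FK)) : hV (flatten K') :=
  match x with
  | inl (inl v) => inl v
  | inl (inr t) => inr (ns1 t)
  | inr t => inr (ns2 t)
  end.

Definition as_e (x : hE (flatten FK)) : hE (flatten K') :=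
  Tagged (fun E : hE K' => hE (@hlab _ K' E))
   (Tagged (fun e => hE (@hlab _ (@hlab _ K (tag (tag x))) e)) (tagged x) : hE (flatten (@hlab _ K (tag (tag x))))).

Lemma flatten_assoc : iso eq (flatten FK) (flatten K').
Proof.
apply: (@mk_iso _ eq _ _ as_v as_e).
- case=> [[v|[E [u Hu]]]|[[E e] [u Hu]]] [[v'|[E' [u' Hu']]]|[[E' e'] [u' Hu']]] //=.
  + by case=> ->.
  + move=> H0; have H := inr_inj' H0; rewrite /ns1 in H; have /= E0 := Tagged_eq H; subst E'.
    have /= E1 := inl_inj' (congr1 val (Tagged_inj H)); subst u'.
    by rewrite (bool_irrelevance Hu Hu').
  + move=> H0; have H := inr_inj' H0; rewrite /ns2 in H; have /= E0 := Tagged_eq H; subst E'.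
    have H2 := inr_inj' (congr1 val (Tagged_inj H)); have /= E1 := Tagged_eq H2; subst e'.
    have /= E2 := congr1 val (Tagged_inj H2); subst u'.
    by rewrite (bool_irrelevance Hu Hu').
- case=> [v|[E [[x|[e u]] Hx]]].
  + by exists (inl (inl v)).
  + have Hx' : x \notin hsrc (@hlab _ K E) by move: Hx; rewrite /= mem_map_inl.
    exists (inl (inr (Tagged (fun E => nonsrc (@hlab _ K E)) (exist _ x Hx' : nonsrc _)))).
    by rewrite /= /ns1; congr (inr (Tagged _ _)); apply: val_inj.
  + exists (inr (Tagged (fun Ee : hE FK => nonsrc (@hlab _ FK Ee))
              (u : nonsrc (@hlab _ FK (Tagged (fun e => hE (@hlab _ K e)) e))))).
    by rewrite /= /ns2; congr (inr (Tagged _ _)); apply: val_inj.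
- case=> [[E e] f] [[E' e'] f'] /= H.
  have /= E0 := Tagged_eq H; subst E'.
  have H2 := Tagged_inj H; have /= E1 := Tagged_eq H2; subst e'.
  by have /= E2 := Tagged_inj H2; subst f'.
- case=> [E [e f]].
  by exists (Tagged (fun Ee : hE FK => hE (@hlab _ FK Ee))
              (f : hE (@hlab _ FK (Tagged (fun e => hE (@hlab _ K e)) e)))).
- by case=> [[E e] f].
- case=> [[E e] f]; rewrite /= /fl_inc /= -!map_comp; apply/eq_in_map => v _ /=.
  case: (boolP (v \in hsrc (@hlab _ (@hlab _ K E) e))) => Hv.
    have w0 : hV (@hlab _ K E) := nth_lt (attach_lt (hinc_size e) Hv).
    rewrite (@fl_vert_src _ (@hlab _ K E) e v w0 Hv).
    rewrite (@fl_vert_src _ FK (Tagged (fun E => hE (@hlab _ K E)) e) v (fl_vert w0) Hv).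
    rewrite /= /fl_inc /= (nth_map w0); last by rewrite (hinc_size e) /= /harity index_mem.
    set x := nth w0 (hinc e) _.
    case: (boolP (x \in hsrc (@hlab _ K E))) => Hx.
      have Hx' : (inl x : hV (@hlab _ K' E)) \in hsrc (@hlab _ K' E) by rewrite /= mem_map_inl.
      have w1 : hV K := nth_lt (attach_lt (hinc_size E) Hx).
      rewrite (@fl_vert_src _ K' E _ w1 Hx') (@fl_vert_src _ K E _ w1 Hx) /=.
      by rewrite index_map // => ? ? [].
    have Hx' : (inl x : hV (@hlab _ K' E)) \notin hsrc (@hlab _ K' E) by rewrite /= mem_map_inl.
    rewrite (@fl_vert_nsrc _ K' E _ Hx') (@fl_vert_nsrc _ K E _ Hx) /=.
    by congr (inr (Tagged _ _)); apply: val_inj.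
  rewrite (@fl_vert_nsrc _ (@hlab _ K E) e v Hv).
  rewrite (@fl_vert_nsrc _ FK (Tagged (fun E => hE (@hlab _ K E)) e) v Hv) /=.
  have Hx' : (inr (Tagged (fun e => nonsrc (@hlab _ (@hlab _ K E) e)) (exist _ v Hv : nonsrc _))
     : hV (@hlab _ K' E)) \notin hsrc (@hlab _ K' E) by rewrite /= mem_map_inr.
  rewrite (@fl_vert_nsrc _ K' E _ Hx') /=.
  by congr (inr (Tagged _ _)); apply: val_inj.
- by rewrite /= -!map_comp.
Qed.
End Assoc.

Section Ext.
Variables (S : rset) (j : nat) (g : hg S).

Definition ext_src : seq (hV g + 'I_j) := map inl (hsrc g) ++ map inr (enum 'I_j).

Lemma ext_inc_size (e : hE g) : size (map (@inl _ 'I_j) (hinc e)) = rar (hlab e).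
Proof. by rewrite size_map hinc_size. Qed.
Lemma ext_inc_uniq (e : hE g) : uniq (map (@inl _ 'I_j) (hinc e)).
Proof. by rewrite map_inj_uniq ?hinc_uniq // => ? ? []. Qed.
Lemma ext_src_uniq : uniq ext_src.
Proof.
rewrite cat_uniq !map_inj_uniq ?hsrc_uniq ?enum_uniq //=; try by move=> ? ? [].
rewrite -enumT enum_uniq andbT; apply/hasP => -[x /mapP [? ? ->]]; by rewrite mem_map_inr.
Qed.

Definition ext : hg S :=
  @HG S (hV g + 'I_j)%type (hE g) (fun e => hlab e) (fun e => map inl (hinc e)) ext_src
    ext_inc_size ext_inc_uniq ext_src_uniq.

Lemma harity_ext : harity ext = harity g + j.
Proof. by rewrite /harity /= /ext_src size_cat !size_map -enumT size_enum_ord. Qed.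

Lemma mem_ext_src_inl v : (inl v \in ext_src) = (v \in hsrc g).
Proof. by rewrite mem_cat mem_map_inl; case: (v \in hsrc g) => //=; apply/mapP => -[]. Qed.

Lemma mem_ext_src_inr i : (inr i \in ext_src).
Proof. by rewrite mem_cat; apply/orP; right; rewrite mem_map ?mem_enum // => ? ? []. Qed.

Lemma index_ext_src_inl v : v \in hsrc g -> index (inl v) ext_src = index v (hsrc g).
Proof.
move=> H; rewrite /ext_src index_cat mem_map_inl H index_map //.
by move=> ? ? [].
Qed.

Definition ext_ns (u : nonsrc ext) : nonsrc g :=
  match val u as x return x \notin ext_src -> nonsrc g with
  | inl v => fun H => exist _ v (etrans (congr1 negb (esym (mem_ext_src_inl v))) H)
  | inr i => fun H => False_rect _ (Bool.diff_false_true (etrans (esym (negbTE H)) (mem_ext_src_inr i)))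
  end (valP u).

Lemma ext_nsE (u : nonsrc ext) : inl (val (ext_ns u)) = val u.
Proof. by case: u => [[v|i] H] /=; last by exfalso; move: H; rewrite mem_ext_src_inr. Qed.

Lemma ext_ns_inj : injective ext_ns.
Proof. by move=> u w E; apply: val_inj; rewrite -!ext_nsE E. Qed.

Definition ns_ext (u : nonsrc g) : nonsrc ext :=
  exist _ (inl (val u)) (etrans (congr1 negb (mem_ext_src_inl (val u))) (valP u)).

Lemma ext_nsK : cancel ns_ext ext_ns.
Proof. by move=> u; apply: val_inj. Qed.
End Ext.

Lemma ext0 (S : rset) (g : hg S) : iso eq g (ext 0 g).
Proof.
apply: (@mk_iso _ eq _ (ext 0 g) inl id) => //.
- by move=> ? ? [].
- by case=> [v|[]]; [exists v|].
- by move=> y; exists y.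
- by rewrite /= /ext_src enum_ord0 cats0.
Qed.

Lemma ext_succ (S : rset) (j : nat) (g : hg S) : iso eq (haddsrc (ext j g)) (ext j.+1 g).
Proof.
pose fv (x : hV (haddsrc (ext j g))) : hV (ext j.+1 g) :=
  match x with
  | Some (inl v) => inl v
  | Some (inr i) => inr (widen_ord (leqnSn j) i)
  | None => inr ord_max end.
apply: (@mk_iso _ eq _ _ fv id) => //.
- case=> [[v|i]|] [[v'|i']|] //=; try by case=> ->.
  + by case=> E; congr (Some (inr _)); apply: val_inj.
  + by case=> E; move: (ltn_ord i); rewrite E ltnn.
  + by case=> E; move: (ltn_ord i'); rewrite -E ltnn.
- case=> [v|i]; first by exists (Some (inl v)).
  case: (unliftP ord_max i) => [i'|] ->.
    exists (Some (inr i')); rewrite /=; congr inr; apply: val_inj => /=.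
    by rewrite /bump leqNgt ltn_ord.
  by exists None.
- by move=> y; exists y.
- by move=> e /=; rewrite -!map_comp.
  rewrite /= /ext_src map_rcons map_cat -!map_comp -!enumT enum_ordSr.
  by rewrite map_cat -!map_comp rcons_cat map_rcons -map_comp.
Qed.

Section Step.
Variables (S : rset) (V E : finType) (inc : E -> seq V) (src : seq V) (l : E -> hg S)
  (Hs : forall e, size (inc e) = harity (l e)) (Hu : forall e, uniq (inc e)) (Hsu : uniq src)
  (e0 : E).

Definition G0 := @HG (HR S) V E l inc src Hs Hu Hsu.
Definition Em : finType := ({e : E | e != e0} : finType).
Definition rest := [seq v <- src | v \notin inc e0].
Definition s' := inc e0 ++ rest.

Lemma s'_uniq : uniq s'.
Proof.
rewrite /s' cat_uniq Hu filter_uniq // andbT /=.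
by apply/hasP => -[x]; rewrite mem_filter => /andP [/negbTE ->].
Qed.

Lemma mem_s' v : v \in src -> v \in s'.
Proof.
by move=> H; rewrite mem_cat mem_filter H andbT; case: (v \in inc e0).
Qed.

Definition Gm := @HG (HR S) V Em (fun e => l (val e)) (fun e => inc (val e)) s'
  (fun e => Hs (val e)) (fun e => Hu (val e)) s'_uniq.

Definition jj := size rest.
Definition g0 := l e0.

Lemma step_p : harity (flatten Gm) = harity (ext jj g0).
Proof. by rewrite harity_ext /harity /= size_map /s' size_cat Hs. Qed.

Definition PP := hpar step_p.

Lemma harity_PP : harity PP = size s'.
Proof. by rewrite /harity /= !size_map. Qed.

Lemma idx_lt (i : 'I_(size src)) : index (nth_lt (ltn_ord i)) s' < size s'.
Proof.
rewrite index_mem; apply: mem_s'.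
by rewrite (nth_ltE _ (nth_lt (ltn_ord i))) mem_nth.
Qed.

Definition ff (i : 'I_(size src)) : 'I_(size s') := Ordinal (idx_lt i).

Lemma ff_inj : injective ff.
Proof.
move=> i i' [] E1.
have x0 := nth_lt (ltn_ord i).
have Hm (k : 'I_(size src)) : nth_lt (ltn_ord k) \in s' by apply: mem_s'; rewrite (nth_ltE _ x0); apply: mem_nth.
have := congr1 (nth x0 s') E1; rewrite !nth_index // !(nth_ltE _ x0) => /eqP.
by rewrite nth_uniq // => /eqP E2; apply: val_inj.
Qed.

Definition FG := hforget ff_inj harity_PP.

Definition st_v (x : hV FG) : hV (flatten G0) :=
  match x with
  | inl (inl v) => inl v
  | inl (inr t) => inr (Tagged (fun e => nonsrc (l e)) (tagged t : nonsrc (l (val (tag t)))))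
  | inr u => inr (Tagged (fun e => nonsrc (l e)) (ext_ns u : nonsrc (l e0)))
  end.

Definition st_e (x : hE FG) : hE (flatten G0) :=
  match x with
  | inl t => Tagged (fun e => hE (l e)) (tagged t : hE (l (val (tag t))))
  | inr f => Tagged (fun e => hE (l e)) (f : hE (l e0))
  end.

Lemma step_iso : iso eq (flatten G0) FG.
Proof.
apply: isoE_sym.
apply: (@mk_iso _ eq _ _ st_v st_e).
- case=> [[v|[e u]]|u] [[v'|[e' u']]|u'] //=.
  + by case=> ->.
  + move=> H0; have H := inr_inj' H0; have /= E1 := Tagged_eq H.
    have E2 := val_inj E1; subst e'.
    by have /= -> := Tagged_inj H.
  + move=> H0; have H := inr_inj' H0; have /= E1 := Tagged_eq H.
    by exfalso; have ne := proj2_sig e; move/eqP: ne; apply; first [exact E1 | exact (esym E1)].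
  + move=> H0; have H := inr_inj' H0; have /= E1 := Tagged_eq H.
    by exfalso; have ne := proj2_sig e'; move/eqP: ne; apply; first [exact E1 | exact (esym E1)].
  + move=> H0; have H := inr_inj' H0; have /= E1 := Tagged_inj H.
    by rewrite (ext_ns_inj E1).
- case=> [v|[e u]]; first by exists (inl (inl v)).
  case: (eqVneq e e0) => [E1|ne].
    subst e; exists (inr (ns_ext jj u)) => /=.
    by rewrite ext_nsK.
  exists (inl (inr (Tagged (fun e : Em => nonsrc (l (val e))) (u : nonsrc (l (val (exist _ e ne : Em))))))).
  by [].
- case=> [[e f]|f] [[e' f']|f'] //=.
  + move=> H; have /= E1 := Tagged_eq H.
    have E2 := val_inj E1; subst e'.
    by have /= -> := Tagged_inj H.
  + by move=> H; have /= E1 := Tagged_eq H; exfalso; have ne := proj2_sig e; move/eqP: ne; apply; first [exact E1 | exact (esym E1)].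
  + by move=> H; have /= E1 := Tagged_eq H; exfalso; have ne := proj2_sig e'; move/eqP: ne; apply; first [exact E1 | exact (esym E1)].
  + by move=> H; have /= -> := Tagged_inj H.
- case=> [e f]; case: (eqVneq e e0) => [E1|ne].
    by subst e; exists (inr f).
  by exists (inl (Tagged (fun e : Em => hE (l (val e))) (f : hE (l (val (exist _ e ne : Em)))))).
- by case=> [[e f]|f].
- case=> [[e f]|f].
  + rewrite /= /fl_inc /= -!map_comp; apply/eq_in_map => v _ /=.
    case: (boolP (v \in hsrc (l (val e)))) => Hv.
      have w0 : V := nth_lt (attach_lt (Hs (val e)) Hv).
      by rewrite (@fl_vert_src _ G0 (val e) v w0 Hv) (@fl_vert_src _ Gm e v w0 Hv).
    rewrite (@fl_vert_nsrc _ G0 (val e) v Hv) (@fl_vert_nsrc _ Gm e v Hv) /=.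
    by congr (inr (Tagged _ _)); apply: val_inj.
  + rewrite /= /fl_inc /= -!map_comp; apply/eq_in_map => v _ /=.
    case: (boolP (v \in hsrc g0)) => Hv.
      have w0 : V := nth_lt (attach_lt (Hs e0) Hv).
      have Hv' : (inl v : hV (ext jj g0)) \in hsrc (ext jj g0) by rewrite /= mem_ext_src_inl.
      rewrite (@fl_vert_src _ G0 e0 v w0 Hv) (attach_src _ (inl w0 : hV (flatten Gm)) Hv') /=.
      rewrite index_ext_src_inl // (nth_map w0); last first.
        by rewrite /s' size_cat (Hs e0) /harity (leq_trans _ (leq_addr _ _)) // index_mem.
      rewrite /s' nth_cat ifT //.
      by rewrite (Hs e0) /harity index_mem.
    have Hv' : (inl v : hV (ext jj g0)) \notin hsrc (ext jj g0) by rewrite /= mem_ext_src_inl.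
    rewrite (@fl_vert_nsrc _ G0 e0 v Hv) (attach_nsrc _ Hv') /=.
    by congr (inr (Tagged _ _)); apply: val_inj.
- rewrite /= -{1}(map_nth_lt_enum src) -map_comp /forget_src -map_comp.
  rewrite -[RHS]map_comp -?enumT; apply: eq_map => i /=.
  set x0 := nth_lt (ltn_ord i).
  have Hm : x0 \in s' by apply: mem_s'; rewrite /x0 (nth_ltE _ x0); apply: mem_nth.
  rewrite (nth_ltE _ (inl (inl x0))) (nth_map (inl x0)) ?(nth_map x0) /=.
  + by rewrite nth_index.
  + by rewrite index_mem.
  + by rewrite size_map index_mem.
Qed.
End Step.

Section HRC.
Variables (S : rset) (R : hg S -> hg S -> Prop) (HRc : HR_compatible R).

Let Heq : hequiv R. Proof. by case: HRc. Qed.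
Lemma Rrefl g : R g g. Proof. by case: Heq => H _ _ _ _; apply: H. Qed.
Lemma Rsym g h : R g h -> R h g. Proof. by case: Heq => _ H _ _ _; apply: H. Qed.
Lemma Rtrans g h k : R g h -> R h k -> R g k. Proof. by case: Heq => _ _ H _ _; apply: H. Qed.
Lemma Riso g h : iso eq g h -> R g h. Proof. by case: Heq => _ _ _ _ H; apply: H. Qed.

Lemma ext_R j g1 g2 : R g1 g2 -> R (ext j g1) (ext j g2).
Proof.
elim: j => [|j IH] H.
  apply: Rtrans (Riso (ext0 g2)); apply: Rtrans H.
  exact: Rsym (Riso (ext0 g1)).
apply: Rtrans (Riso (ext_succ j g2)); apply: Rtrans (Rsym (Riso (ext_succ j g1))) _.
by case: HRc => _ _ Ha _; apply: Ha; apply: IH.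
Qed.

Lemma claim n : forall (V E : finType) (inc : E -> seq V) (src : seq V) (l1 l2 : E -> hg S)
  Hs1 Hs2 Hu1 Hu2 Hsu1 Hsu2, #|E| = n -> (forall e, R (l1 e) (l2 e)) ->
  R (flatten (@HG (HR S) V E l1 inc src Hs1 Hu1 Hsu1))
    (flatten (@HG (HR S) V E l2 inc src Hs2 Hu2 Hsu2)).
Proof.
elim: n => [|n IH] V E inc src l1 l2 Hs1 Hs2 Hu1 Hu2 Hsu1 Hsu2 HE Hl.
  apply: Riso; apply: flatten_iso.
  pose G1 := @HG (HR S) V E l1 inc src Hs1 Hu1 Hsu1.
  pose G2 := @HG (HR S) V E l2 inc src Hs2 Hu2 Hsu2.
  refine (@mk_iso (HR S) (fun a b : HR S => iso eq a b) G1 G2 (fun x => x) (fun e => e) _ _ _ _ _ _ _) => //.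
  - by move=> y; exists y.
  - by move=> y; exists y.
  - by move=> e; have := card0_eq HE e; rewrite inE.
  - by move=> e; rewrite map_id.
  - by rewrite map_id.
have [e0 _] : exists e0 : E, true.
  case: (pickP (@predT E)) => [e0 _|H]; first by exists e0.
  by move: HE; rewrite (eq_card0 H).
have -> : @HG (HR S) V E l2 inc src Hs2 Hu2 Hsu2 = @HG (HR S) V E l2 inc src Hs2 Hu1 Hsu1 by apply: HG_eq.
have I1 := step_iso Hs1 Hu1 Hsu1 e0.
have I2 := step_iso Hs2 Hu1 Hsu1 e0.
apply: Rtrans (Riso I1) _; apply: Rtrans (Rsym (Riso I2)).
case: HRc => _ Hpar _ Hforget.
rewrite /FG; apply: Hforget; rewrite /PP; apply: Hpar; last exact: ext_R.
apply: IH => //.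
by rewrite card_sig cardC1 HE.
Qed.

Lemma HRc_congr : congruence R.
Proof.
split; first exact: Heq.
move=> X t eta1 eta2 H; rewrite /polyop /relabel.
apply: (@claim #|hE t|) => // e.
by case: (hlab e) => [g|x] /=; [apply: Rrefl | apply: H].
Qed.

End HRC.

Section NthOrd.
Variables (S : rset) (g : hg S) (n : nat) (p : harity g = n).
Lemma ord_lt_src (i : 'I_n) : val i < size (hsrc g).
Proof. by apply: (leq_trans (ltn_ord i)); rewrite -p. Qed.
Definition nth_ord (i : 'I_n) : hV g := nth_lt (ord_lt_src i).
Lemma nth_ordE v0 (i : 'I_n) : nth_ord i = nth v0 (hsrc g) i.
Proof. exact: nth_ltE. Qed.
Lemma nth_ord_inj : injective nth_ord.
Proof.
move=> i j; have v0 := nth_ord i; rewrite !(nth_ordE v0) => /eqP.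
by rewrite nth_uniq ?hsrc_uniq ?ord_lt_src // => /eqP E; apply: val_inj.
Qed.
Lemma nth_ord_mem (i : 'I_n) : nth_ord i \in hsrc g.
Proof. by rewrite (nth_ordE (nth_ord i)) mem_nth ?ord_lt_src. Qed.
Lemma nth_ord_index v (H : v \in hsrc g) : index v (hsrc g) < n.
Proof. by rewrite -p /harity index_mem. Qed.
Lemma nth_ord_indexE v (H : v \in hsrc g) : nth_ord (Ordinal (nth_ord_index H)) = v.
Proof. by rewrite (nth_ordE v) /= nth_index. Qed.
Lemma enum_size : size (enum 'I_n) = harity g.
Proof. by rewrite size_enum_ord p. Qed.
End NthOrd.

Section Single.
Variables (S : rset) (g : hg S) (n : nat) (p : harity g = n) (s : seq 'I_n) (Hs : uniq s).

Definition T1 : hg (HR S) := @HG (HR S) 'I_n unit (fun _ => g) (fun _ => enum 'I_n) s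
  (fun _ => enum_size p) (fun _ => enum_uniq _) Hs.

Lemma T1_src_uniq : uniq (map (nth_ord p) s).
Proof. by rewrite map_inj_uniq //; apply: nth_ord_inj. Qed.

Definition T1' : hg S := @HG S (hV g) (hE g) (@hlab _ g) (@hinc _ g) (map (nth_ord p) s)
  (@hinc_size _ g) (@hinc_uniq _ g) T1_src_uniq.

Lemma flatten_single : iso eq (flatten T1) T1'.
Proof.
pose fv (x : hV (flatten T1)) : hV g :=
  match x with inl i => nth_ord p i | inr t => val (tagged t) end.
pose fe (t : hE (flatten T1)) : hE g := tagged t.
apply: (@mk_iso _ eq _ T1' fv fe).
- case=> [i|[[] [u Hu]]] [j|[[] [w Hw]]] //=.
  + by move/nth_ord_inj ->.
  + by move=> E; exfalso; move: Hw; rewrite -E nth_ord_mem.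
  + by move=> E; exfalso; move: Hu; rewrite E nth_ord_mem.
  + by move=> E; subst w; congr (inr (Tagged _ _)); apply: val_inj.
- move=> v; case: (boolP (v \in hsrc g)) => Hv.
    by exists (inl (Ordinal (nth_ord_index p Hv))); rewrite /= nth_ord_indexE.
  by exists (inr (@Tagged _ tt (fun _ => nonsrc g) (exist _ v Hv : nonsrc g))).
- by case=> [[] f] [[] f'] /= E; subst f'.
- by move=> f; exists (@Tagged _ tt (fun _ => hE g) f).
- by case=> [[] f].
- case=> [[] f]; rewrite /fe /= /fl_inc /= -map_comp -[LHS]map_id.
  apply/eq_in_map => v _ /=.
  case: (boolP (v \in hsrc g)) => Hv.
    rewrite (@fl_vert_src _ T1 tt v (Ordinal (nth_ord_index p Hv)) Hv) /=.
    have -> : nth (Ordinal (nth_ord_index p Hv)) (enum 'I_n) (index v (hsrc g)) = Ordinal (nth_ord_index p Hv).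
      by apply: val_inj; rewrite /= nth_enum_ord // (nth_ord_index p Hv).
    by rewrite nth_ord_indexE.
  by rewrite (@fl_vert_nsrc _ T1 tt v Hv).
- by rewrite /= -map_comp.
Qed.
End Single.

Lemma forget_T1' (S : rset) k n (f : 'I_k -> 'I_n) (finj : injective f) (g : hg S) (p : harity g = n) :
  hforget finj p = T1' p (etrans (map_inj_uniq finj _) (enum_uniq 'I_k) : uniq (map f (enum 'I_k))).
Proof.
apply: HG_eq => //; rewrite /forget_src -map_comp; apply/eq_map => i /=.
by rewrite /nth_ord; apply: nth_lt_PI.
Qed.

Lemma map_nth_ord (S : rset) (g : hg S) n (p : harity g = n) :
  map (nth_ord p) (enum 'I_n) = hsrc g.
Proof.
case: n / p; rewrite -[RHS](map_nth_lt_enum (hsrc g)); apply: eq_map => i.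
exact: nth_lt_PI.
Qed.

Section Add.
Variables (S : rset) (g : hg S) (n : nat) (p : harity g = n).

Lemma T2_size (_ : unit) : size (map Some (enum 'I_n)) = @rar (HR S) g.
Proof. by rewrite size_map (enum_size p). Qed.
Lemma T2_uniq (_ : unit) : uniq (map Some (enum 'I_n)).
Proof. by rewrite map_inj_uniq ?enum_uniq // => ? ? []. Qed.
Lemma T2_src_uniq : uniq (rcons (map Some (enum 'I_n)) None).
Proof. by rewrite rcons_uniq T2_uniq // andbT; apply/mapP => -[]. Qed.

Definition T2 : hg (HR S) := @HG (HR S) (option 'I_n : finType) unit (fun _ => g)
  (fun _ => map Some (enum 'I_n)) (rcons (map Some (enum 'I_n)) None) T2_size T2_uniq T2_src_uniq.

Lemma flatten_add : iso eq (flatten T2) (haddsrc g).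
Proof.
pose fv (x : hV (flatten T2)) : hV (haddsrc g) :=
  match x with inl (Some i) => Some (nth_ord p i) | inl None => None | inr t => Some (val (tagged t)) end.
pose fe (t : hE (flatten T2)) : hE (haddsrc g) := tagged t.
apply: (@mk_iso _ eq _ _ fv fe).
- case=> [[i|]|[[] [u Hu]]] [[j|]|[[] [w Hw]]] //=.
  + by case=> /nth_ord_inj ->.
  + by case=> E; exfalso; move: Hw; rewrite -E nth_ord_mem.
  + by case=> E; exfalso; move: Hu; rewrite E nth_ord_mem.
  + by case=> E; subst w; congr (inr (Tagged _ _)); apply: val_inj.
- case=> [v|]; last by exists (inl None).
  case: (boolP (v \in hsrc g)) => Hv.
    by exists (inl (Some (Ordinal (nth_ord_index p Hv)))); rewrite /= nth_ord_indexE.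
  by exists (inr (@Tagged _ tt (fun _ => nonsrc g) (exist _ v Hv : nonsrc g))).
- by case=> [[] f] [[] f'] /= E; subst f'.
- by move=> f; exists (@Tagged _ tt (fun _ => hE g) f).
- by case=> [[] f].
- case=> [[] f]; rewrite /fe /= /fl_inc /= -!map_comp.
  apply/eq_in_map => v _ /=.
  case: (boolP (v \in hsrc g)) => Hv.
    rewrite (@fl_vert_src _ T2 tt v (Some (Ordinal (nth_ord_index p Hv))) Hv) /=.
    rewrite (nth_map (Ordinal (nth_ord_index p Hv))); last by rewrite size_enum_ord (nth_ord_index p Hv).
    have -> : nth (Ordinal (nth_ord_index p Hv)) (enum 'I_n) (index v (hsrc g)) = Ordinal (nth_ord_index p Hv).
      by apply: val_inj; rewrite /= nth_enum_ord // (nth_ord_index p Hv).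
    by rewrite nth_ord_indexE.
  by rewrite (@fl_vert_nsrc _ T2 tt v Hv).
- rewrite /= !map_rcons; congr rcons.
  apply: (@eq_trans _ _ (map Some (map (nth_ord p) (enum 'I_n)))); first by rewrite map_nth_ord.
  by rewrite -!map_comp.
Qed.
End Add.

Section Par2.
Variables (S : rset) (g h : hg S) (n : nat) (pg : harity g = n) (ph : harity h = n)
  (p : harity g = harity h).

Definition T3lab (b : bool) : HR S := if b then g else h.
Lemma T3_size (b : bool) : size (enum 'I_n) = rar (T3lab b).
Proof. by case: b; rewrite /= ?pg ?ph size_enum_ord. Qed.

Definition T3 : hg (HR S) := @HG (HR S) 'I_n bool T3lab (fun _ => enum 'I_n) (enum 'I_n)
  T3_size (fun _ => enum_uniq _) (enum_uniq _).

Lemma flatten_par : iso eq (flatten T3) (hpar p).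
Proof.
pose fv (x : hV (flatten T3)) : hV (hpar p) :=
  match x with
  | inl i => inl (nth_ord pg i)
  | inr t => (if tag t as b return nonsrc (T3lab b) -> hV (hpar p)
              then fun u => inl (val u) else fun u => inr u) (tagged t)
  end.
pose fe (t : hE (flatten T3)) : hE (hpar p) :=
  (if tag t as b return hE (T3lab b) -> hE (hpar p)
   then fun f => inl f else fun f => inr f) (tagged t).
apply: (@mk_iso _ eq _ _ fv fe).
- case=> [i|[[] [u Hu]]] [j|[[] [w Hw]]] //=.
  + by case=> /nth_ord_inj ->.
  + by case=> E; exfalso; move: Hw; rewrite -E nth_ord_mem.
  + by case=> E; exfalso; move: Hu; rewrite E nth_ord_mem.
  + by case=> E; subst w; congr (inr (Tagged _ _)); apply: val_inj.
  + by case=> E; subst w; congr (inr (Tagged _ _)); apply: val_inj.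
- case=> [v|u].
    case: (boolP (v \in hsrc g)) => Hv.
      by exists (inl (Ordinal (nth_ord_index pg Hv))); rewrite /= nth_ord_indexE.
    by exists (inr (@Tagged _ true (fun b => nonsrc (T3lab b)) (exist _ v Hv : nonsrc g))).
  by exists (inr (@Tagged _ false (fun b => nonsrc (T3lab b)) u)).
- by case=> [[] f] [[] f'] //= [] E; subst f'.
- case=> f.
    by exists (@Tagged _ true (fun b => hE (T3lab b)) f).
  by exists (@Tagged _ false (fun b => hE (T3lab b)) f).
- by case=> [[] f].
- case=> [[] f]; rewrite /fe /= /fl_inc /= -!map_comp; apply/eq_in_map => v _ /=.
  + case: (boolP (v \in hsrc g)) => Hv.
      rewrite (@fl_vert_src _ T3 true v (Ordinal (nth_ord_index pg Hv)) Hv) /=.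
      have -> : nth (Ordinal (nth_ord_index pg Hv)) (enum 'I_n) (index v (hsrc g)) = Ordinal (nth_ord_index pg Hv).
        by apply: val_inj; rewrite /= nth_enum_ord // (nth_ord_index pg Hv).
      by rewrite nth_ord_indexE.
    by rewrite (@fl_vert_nsrc _ T3 true v Hv).
  + case: (boolP (v \in hsrc h)) => Hv.
      rewrite (@fl_vert_src _ T3 false v (Ordinal (nth_ord_index ph Hv)) Hv) /=.
      have -> : nth (Ordinal (nth_ord_index ph Hv)) (enum 'I_n) (index v (hsrc h)) = Ordinal (nth_ord_index ph Hv).
        by apply: val_inj; rewrite /= nth_enum_ord // (nth_ord_index ph Hv).
      have w0 := nth_ord pg (Ordinal (nth_ord_index ph Hv)).
      by rewrite (attach_src _ w0 Hv) (nth_ordE _ w0).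
    by rewrite (@fl_vert_nsrc _ T3 false v Hv) (attach_nsrc _ Hv).
- rewrite /=.
  apply: (@eq_trans _ _ (map inl (map (nth_ord pg) (enum 'I_n)))); first by rewrite map_nth_ord.
  by rewrite -!map_comp.
Qed.
End Par2.

Section HQ.
Variables (S : rset) (R : hg S -> hg S -> Prop) (Heq : hequiv R).
Lemma hq_refl g : R g g. Proof. by case: Heq => H _ _ _ _; apply: H. Qed.
Lemma hq_sym g h : R g h -> R h g. Proof. by case: Heq => _ H _ _ _; apply: H. Qed.
Lemma hq_trans g h k : R g h -> R h k -> R g k. Proof. by case: Heq => _ _ H _ _; apply: H. Qed.
Lemma hq_iso g h : iso eq g h -> R g h. Proof. by case: Heq => _ _ _ _ H; apply: H. Qed.
Lemma hq_ar g h : R g h -> harity g = harity h. Proof. by case: Heq => _ _ _ H _; apply: H. Qed.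
End HQ.

Section Cong.
Variables (S : rset) (R : hg S -> hg S -> Prop) (Hc : congruence R).
Let Heq : hequiv R. Proof. by case: Hc. Qed.
Let Hpoly := proj2 Hc.

Lemma cong_forget k n (f : 'I_k -> 'I_n) (finj : injective f) (g1 g2 : hg S)
  (p1 : harity g1 = n) (p2 : harity g2 = n) :
  R g1 g2 -> R (hforget finj p1) (hforget finj p2).
Proof.
move=> H12.
pose X := @RSet unit (fun _ => n).
pose eta1 := @RMap X (HR S) (fun _ => g1) (fun _ => p1).
pose eta2 := @RMap X (HR S) (fun _ => g2) (fun _ => p2).
have Hu : uniq (map f (enum 'I_k)) := etrans (map_inj_uniq finj _) (enum_uniq 'I_k).
pose t : hg (sumR (HR S) X) := @HG (sumR (HR S) X) 'I_n unit (fun _ => inr tt)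
  (fun _ => enum 'I_n) (map f (enum 'I_k)) (fun _ => size_enum_ord n) (fun _ => enum_uniq _) Hu.
have := @Hpoly X t eta1 eta2 (fun _ => H12).
have E1 : polyop t eta1 = flatten (T1 p1 Hu) by rewrite /polyop; congr flatten; apply: HG_eq.
have E2 : polyop t eta2 = flatten (T1 p2 Hu) by rewrite /polyop; congr flatten; apply: HG_eq.
rewrite E1 E2 !forget_T1' (bool_irrelevance (etrans _ _) Hu) => H.
apply: (hq_trans Heq _ (hq_iso Heq (flatten_single p2 Hu))).
apply: (hq_trans Heq _ H).
exact: (hq_iso Heq (isoE_sym (flatten_single p1 Hu))).
Qed.

Lemma cong_add (g1 g2 : hg S) : R g1 g2 -> R (haddsrc g1) (haddsrc g2).
Proof.
move=> H12.
pose n := harity g1.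
have p1 : harity g1 = n by [].
have p2 : harity g2 = n by rewrite /n (hq_ar Heq H12).
pose X := @RSet unit (fun _ => n).
pose eta1 := @RMap X (HR S) (fun _ => g1) (fun _ => p1).
pose eta2 := @RMap X (HR S) (fun _ => g2) (fun _ => p2).
have Hs : size (map Some (enum 'I_n)) = n by rewrite size_map size_enum_ord.
have Hu : uniq (map Some (enum 'I_n)) by rewrite map_inj_uniq ?enum_uniq // => ? ? [].
have Hsu : uniq (rcons (map Some (enum 'I_n)) None).
  by rewrite rcons_uniq Hu andbT; apply/mapP => -[].
pose t : hg (sumR (HR S) X) := @HG (sumR (HR S) X) (option 'I_n : finType) unit (fun _ => inr tt)
  (fun _ => map Some (enum 'I_n)) (rcons (map Some (enum 'I_n)) None) (fun _ => Hs) (fun _ => Hu) Hsu.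
have := @Hpoly X t eta1 eta2 (fun _ => H12).
have E1 : polyop t eta1 = flatten (T2 p1) by rewrite /polyop; congr flatten; apply: HG_eq.
have E2 : polyop t eta2 = flatten (T2 p2) by rewrite /polyop; congr flatten; apply: HG_eq.
rewrite E1 E2 => H.
apply: (hq_trans Heq _ (hq_iso Heq (flatten_add p2))).
apply: (hq_trans Heq _ H).
exact: (hq_iso Heq (isoE_sym (flatten_add p1))).
Qed.

Lemma cong_par (g1 g2 h1 h2 : hg S) (p1 : harity g1 = harity h1) (p2 : harity g2 = harity h2) :
  R g1 g2 -> R h1 h2 -> R (hpar p1) (hpar p2).
Proof.
move=> Hg Hh.
pose n := harity g1.
have pg1 : harity g1 = n by [].
have ph1 : harity h1 = n by rewrite /n p1.
have pg2 : harity g2 = n by rewrite /n (hq_ar Heq Hg).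
have ph2 : harity h2 = n by rewrite -(hq_ar Heq Hh).
pose X := @RSet bool (fun _ => n).
pose eta1 := @RMap X (HR S) (T3lab g1 h1) (fun b => if b as b return harity (T3lab g1 h1 b) = n then pg1 else ph1).
pose eta2 := @RMap X (HR S) (T3lab g2 h2) (fun b => if b as b return harity (T3lab g2 h2 b) = n then pg2 else ph2).
pose t : hg (sumR (HR S) X) := @HG (sumR (HR S) X) 'I_n bool (fun b => inr b)
  (fun _ => enum 'I_n) (enum 'I_n) (fun _ => size_enum_ord n) (fun _ => enum_uniq _) (enum_uniq _).
have := @Hpoly X t eta1 eta2 (fun b => if b as b return R (eta1 b) (eta2 b) then Hg else Hh).
have E1 : polyop t eta1 = flatten (T3 pg1 ph1) by rewrite /polyop; congr flatten; apply: HG_eq.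
have E2 : polyop t eta2 = flatten (T3 pg2 ph2) by rewrite /polyop; congr flatten; apply: HG_eq.
rewrite E1 E2 => H.
apply: (hq_trans Heq _ (hq_iso Heq (flatten_par pg2 ph2 p2))).
apply: (hq_trans Heq _ H).
exact: (hq_iso Heq (isoE_sym (flatten_par pg1 ph1 p1))).
Qed.

Lemma cong_HRc : HR_compatible R.
Proof.
split=> //.
- by move=> *; apply: cong_par.
- by move=> *; apply: cong_add.
- by move=> *; apply: cong_forget.
Qed.
End Cong.

Lemma iso_eq_iso (S : rset) (G G' : hg (HR S)) :
  iso eq G G' -> iso (fun a b : HR S => iso eq a b) G G'.
Proof.
case=> fv [fe [bv be Hl Hi Hs]]; exists fv, fe; split=> // e.
by rewrite -(Hl e); apply: isoE_refl.
Qed.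

Section CongFlatten.
Variables (S : rset) (R : hg S -> hg S -> Prop) (Hc : congruence R).

Lemma cong_flatten (B : rset) (G : hg B) (f1 f2 : rmap B (HR S)) :
  (forall e : hE G, R (f1 (hlab e)) (f2 (hlab e))) ->
  R (flatten (relabel f1 G)) (flatten (relabel f2 G)).
Proof.
move=> H.
pose X := @RSet (hE G) (fun e => rar (hlab e)).
pose eta1 := @RMap X (HR S) (fun e => f1 (hlab e)) (fun e => rfunP f1 (hlab e)).
pose eta2 := @RMap X (HR S) (fun e => f2 (hlab e)) (fun e => rfunP f2 (hlab e)).
pose t : hg (sumR (HR S) X) := @HG (sumR (HR S) X) (hV G) (hE G) (fun e => inr e)
  (@hinc _ G) (hsrc G) (@hinc_size _ G) (@hinc_uniq _ G) (hsrc_uniq G).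
have := (proj2 Hc) X t eta1 eta2 H.
have E1 : polyop t eta1 = flatten (relabel f1 G) by rewrite /polyop; congr flatten; apply: HG_eq.
have E2 : polyop t eta2 = flatten (relabel f2 G) by rewrite /polyop; congr flatten; apply: HG_eq.
by rewrite E1 E2.
Qed.
End CongFlatten.

Lemma sig_eqP (T : Type) (P : T -> Prop) (x y : {a | P a}) : sval x = sval y -> x = y.
Proof.
case: x y => [a Ha] [b Hb] /= E; subst b.
by rewrite (proof_irrelevance _ Ha Hb).
Qed.

Section Quot.
Variables (S : rset) (R : hg S -> hg S -> Prop) (Hc : congruence R).
Let Heq : hequiv R. Proof. by case: Hc. Qed.

Definition QT := {P : hg S -> Prop | exists g, P = R g}.
Definition qrep (a : QT) : hg S := sval (constructive_indefinite_description _ (proj2_sig a)).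
Lemma qrep_spec a : sval a = R (qrep a).
Proof. by rewrite /qrep; case: (constructive_indefinite_description _ _). Qed.
Definition QA : rset := @RSet QT (fun a => harity (qrep a)).
Definition qcls (g : hg S) : QA := exist _ (R g) (ex_intro _ g erefl).

Lemma qcls_eq g g' : R g g' -> qcls g = qcls g'.
Proof.
move=> H; apply: sig_eqP => /=.
apply: functional_extensionality => x; apply: propositional_extensionality; split=> H'.
  exact: (hq_trans Heq (hq_sym Heq H) H').
exact: (hq_trans Heq H H').
Qed.

Lemma qcls_eqR g g' : qcls g = qcls g' -> R g g'.
Proof. by move/(congr1 sval) => /= E; rewrite E; apply: hq_refl. Qed.

Lemma qclsK (a : QA) : qcls (qrep a) = a.
Proof. by apply: sig_eqP; rewrite /= qrep_spec. Qed.

Lemma qrepK g : R (qrep (qcls g)) g.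
Proof. by apply: qcls_eqR; rewrite qclsK. Qed.

Definition qrepR : rmap QA (HR S) := @RMap QA (HR S) qrep (fun a => erefl).
Lemma qclsP g : rar (qcls g) = @rar (HR S) g.
Proof. exact: (hq_ar Heq (qrepK g)). Qed.
Definition qclsR : rmap (HR S) QA := @RMap (HR S) QA qcls qclsP.

Lemma qpiP (G : HR QA) : rar (qcls (flatten (relabel qrepR G))) = rar G.
Proof. by rewrite qclsP /= /harity /= size_map. Qed.
Definition qpi : rmap (HR QA) QA := @RMap (HR QA) QA (fun G => qcls (flatten (relabel qrepR G))) qpiP.

Lemma qpi_Halg : is_Halg qpi.
Proof.
split.
- move=> G G' H; apply: qcls_eq; apply: (hq_iso Heq); apply: flatten_iso.
  by apply: iso_eq_iso; apply: relabel_iso.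
- move=> a; rewrite -[RHS]qclsK; apply: qcls_eq; apply: (hq_iso Heq).
  have -> : relabel qrepR (@hunit QA a) = @hunit (HR S) (qrep a) by apply: HG_eq.
  exact: flatten_unit.
- move=> G; rewrite /= relabel_flatten; apply: qcls_eq.
  apply: (hq_trans Heq); last first.
    apply: (hq_iso Heq); apply: isoE_sym; exact: flatten_assoc.
  rewrite !relabel_comp; apply: cong_flatten => // e /=.
  exact: qrepK.
Qed.

Lemma qcls_hom : is_Hhom qpi qclsR.
Proof.
split.
- by move=> g g' H; apply: qcls_eq; apply: (hq_iso Heq).
- move=> G; rewrite /=; apply: qcls_eq.
  have E : relabel (@RMap (HR S) (HR S) id (fun _ => erefl)) G = G by case: G => *; apply: HG_eq.
  rewrite -{1}E.
  rewrite relabel_comp; apply: cong_flatten => // e /=.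
  apply: (hq_sym Heq); exact: (qrepK (hlab e)).
Qed.
End Quot.

Theorem theorem3p7 (S : rset) (L : hg S -> Prop)
  (HL0 : forall g : hg S, L g -> harity g = 0)
  (HLiso : forall g g' : hg S, iso (@eq S) g g' -> L g -> L g') :
  ((exists (A : rset) (pi : rmap (HR A) A),
       [/\ is_Halg pi, finite_on_arities A & recognised_by_alg L pi])
   <->
   (exists R : hg S -> hg S -> Prop,
       [/\ congruence R, finite_index R & saturates R L]))
  /\
  ((exists R : hg S -> hg S -> Prop,
       [/\ congruence R, finite_index R & saturates R L])
   <->
   (exists R : hg S -> hg S -> Prop,
       [/\ HR_compatible R, finite_index R & saturates R L])).
Proof.
split; last first.
  split.
    by case=> R [Hc Hfi Hsat]; exists R; split=> //; apply: cong_HRc.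
  by case=> R [Hh Hfi Hsat]; exists R; split=> //; apply: HRc_congr.
split.
  case=> A [pi [Halg Hfin [h [[Hiso Hhom] [F HF]]]]].
  have Har g g' : h g = h g' -> harity g = harity g'.
    by move=> E; have H1 := rfunP h g; have H2 := rfunP h g'; rewrite E in H1; exact: (etrans (esym H1) H2).
  exists (fun g g' => h g = h g'); split.
  - split.
      split=> [g|g g' ->|g1 g2 g3 -> ->|g g'|g g' H] //; first exact: Har.
      exact: Hiso.
    move=> X t eta1 eta2 H; rewrite /polyop !Hhom; congr (pi _).
    apply: HG_eq => //; apply: functional_extensionality => e /=.
    by case: (@hlab _ t e) => [g|x] //=; rewrite H.
  - move=> n; case: (Hfin n) => m [enm Henm].
    exists m, (fun i => epsilon (inhabits (hempty S)) (fun g => h g = enm i)).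
    move=> g Hg.
    have Hr : rar (h g) = n by rewrite (rfunP h g).
    case: (Henm (h g) Hr) => i Ei; exists i.
    have := @epsilon_spec _ (inhabits (hempty S)) (fun g => h g = enm i) (ex_intro _ g (esym Ei)).
    by move=> ->.
  - move=> g g' E Lg; apply/HF.
    have [Fg Ag] := (HF g).1 Lg.
    by rewrite -E -(Har _ _ E).
case=> R [Hc Hfi Hsat].
exists (QA R), (qpi Hc); split.
- exact: qpi_Halg.
- move=> n; case: (Hfi n) => m [rep' Hr].
  exists m, (fun i => qcls R (rep' i)) => a Ha.
  case: (Hr (qrep a) Ha) => i Hi; exists i.
  rewrite -[RHS](qclsK a); apply: (qcls_eq Hc).
  by apply: (hq_sym (proj1 Hc)); exact: Hi.
- exists (qclsR Hc); split; first exact: qcls_hom.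
  exists (fun a => exists g, L g /\ qcls R g = a) => g; split.
    by move=> Lg; split; [exists g | exact: HL0].
  case=> [[g' [Lg' E]] _]; apply: Hsat Lg'.
  exact: (qcls_eqR Hc E).
Qed.
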